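(* Let $r\ge 1$ and suppose $(\boldsymbol\lambda,\mathbf{s})\in\mathcal{A}_e^r$ is not a Rouquier multipartition. Then $\Psi_r(\boldsymbol\lambda,\mathbf{s})\in\mathcal{A}_e$ is not an $r$-Rouquier partition.
   Context: Fix an integer $e\ge 2$. A partition is a weakly decreasing sequence $\lambda=(\lambda_1,\lambda_2,\dots)$ of non-negative integers with finite sum $|\lambda|$; $\Lambda$ denotes the set of partitions and $\Lambda^{(m)}$ the set of $m$-multipartitions, i.e. $m$-tuples $\boldsymbol\lambda=(\lambda^{(1)},\dots,\lambda^{(m)})$ of partitions. A $\beta$-set is a subset $B\subseteq\mathbb{Z}$ containing all sufficiently small integers and no sufficiently large ones. For $\lambda\in\Lambda$ and $s\in\mathbb{Z}$ set $B_s(\lambda)=\{\lambda_i-i+s : i\ge 1\}$; every $\beta$-set equals $B_s(\lambda)$ for a unique pair $(\lambda,s)$. Let $\mathcal{A}_e=\Lambda\times\mathbb{Z}$ (abacus configurations with $e$ runners) and $\mathcal{A}_e^m=\Lambda^{(m)}\times\mathbb{Z}^m$, where $(\boldsymbol\lambda,\mathbf{s})$ is identified with the $m$-tuple of $\beta$-sets $(B_{s_1}(\lambda^{(1)}),\dots,B_{s_m}(\lambda^{(m)}))$. The map $\eta$: for $(\lambda,s)\in\mathcal{A}_e$ with $B=B_s(\lambda)$ and $0\le i<e$, the set $C_i=\{(b-i)/e : b\in B,\ b\equiv i \bmod e\}$ is a $\beta$-set, so $C_i=B_{t_i}(\rho_i)$ for a unique $(\rho_i,t_i)\in\Lambda\times\mathbb{Z}$;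 set $\eta(\lambda,s)=((\rho_0,\dots,\rho_{e-1}),(t_0,\dots,t_{e-1}))$. The $e$-weight of $\lambda$ is $\mathrm{wt}(\lambda)=\sum_i|\rho_i|$. Rouquier: $(\lambda,s)\in\mathcal{A}_e$ with $\eta(\lambda,s)=(\boldsymbol\rho,\mathbf{t})$ is a Rouquier partition if $\mathrm{wt}(\lambda)\le t_{i+1}-t_i+1$ for all $0\le i<e-1$, and an $r$-Rouquier partition if $\mathrm{wt}(\lambda)\le t_{i+1}-t_i+r$ for all $0\le i<e-1$. $(\boldsymbol\lambda,\mathbf{s})\in\mathcal{A}_e^r$ is a Rouquier multipartition if $(\lambda^{(k)},s_k)$ is a Rouquier partition for every $1\le k\le r$. Uglov's map: for $1\le k\le r$ define $\psi_k:\mathbb{Z}\to\mathbb{Z}$ by $\psi_k(ae+i)=((a+1)r-k)e+i$ for $a\in\mathbb{Z}$, $0\le i<e$. For $(\boldsymbol\lambda,\mathbf{s})\in\mathcal{A}_e^r$ the set $B=\bigsqcup_{k=1}^r\psi_k(B_{s_k}(\lambda^{(k)}))$ is a $\beta$-set, and $\Psi_r(\boldsymbol\lambda,\mathbf{s})$ is the unique $(\tilde\lambda,\tilde s)\in\mathcal{A}_e$ with $B_{\tilde s}(\tilde\lambda)=B$. *)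

(* Defs.v *)
From mathcomp Require Import all_boot all_order all_algebra.
Set Implicit Arguments. Unset Strict Implicit. Unset Printing Implicit Defensive.
Import Order.TTheory GRing.Theory Num.Theory.
Local Open Scope ring_scope.

(* A partition is represented by a weakly decreasing finite sequence of
   naturals (implicitly padded with zeros); trailing zeros are harmless. *)
Definition is_partition (la : seq nat) : bool := sorted geq la.

Definition psize (la : seq nat) : nat := sumn la.

(* beta-set B_s(la) = { la_i - i + s : i >= 1 }, as a predicate on int.
   Index i >= 1 is written j.+1 with j : nat. *)
Definition betaset (la : seq nat) (s : int) : int -> Prop :=
  fun b => exists j : nat, b = (nth 0%N la j)%:Z - (j.+1)%:Z + s.

Definition set_eq (B C : int -> Prop) : Prop := forall x, B x <-> C x.

Definition runner (e i : nat) (B : int -> Prop) : int -> Prop :=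
  fun c => exists b, B b /\ (e%:Z %| b - i%:Z)%Z /\ c = ((b - i%:Z) %/ e%:Z)%Z.

Definition is_eta (e : nat) (la : seq nat) (s : int)
  (rho : nat -> seq nat) (t : nat -> int) : Prop :=
  forall i, (i < e)%N ->
    is_partition (rho i) /\ set_eq (runner e i (betaset la s)) (betaset (rho i) (t i)).

Definition eweight (e : nat) (rho : nat -> seq nat) : nat :=
  (\sum_(i < e) psize (rho i))%N.

Definition r_rouquier (e r : nat) (la : seq nat) (s : int) : Prop :=
  forall rho t, is_eta e la s rho t ->
    forall i : nat, (i.+1 < e)%N ->
      (eweight e rho)%:Z <= t i.+1 - t i + r%:Z.

Definition rouquier (e : nat) (la : seq nat) (s : int) : Prop :=
  r_rouquier e 1 la s.

Definition psi (e r k : nat) (x : int) : int :=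
  let a := (x %/ e%:Z)%Z in
  let i := (x %% e%:Z)%Z in
  ((a + 1) * r%:Z - k%:Z) * e%:Z + i.

(* B = disjoint union over 1 <= k <= r of psi_k(B_{s_k}(la^(k))).
   Components are indexed by k : 'I_r, standing for k.+1. *)
Definition uglov_set (e r : nat) (la : 'I_r -> seq nat) (s : 'I_r -> int)
  : int -> Prop :=
  fun b => exists (k : 'I_r) (x : int),
    betaset (la k) (s k) x /\ b = psi e r k.+1 x.

(* Main.v *)
Require Import Defs.
From mathcomp Require Import all_boot all_order all_algebra.
From mathcomp Require Import zify ring lra.
From Stdlib Require Import ClassicalDescription Classical ClassicalEpsilon.
Set Implicit Arguments. Unset Strict Implicit. Unset Printing Implicit Defensive.
Import Order.TTheory GRing.Theory Num.Theory.
Local Open Scope ring_scope.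

Definition bP (P : Prop) : bool := if excluded_middle_informative P then true else false.
Lemma bPE (P : Prop) : bP P = true <-> P.
Proof. rewrite /bP; case: excluded_middle_informative => //. Qed.
Lemma bPF (P : Prop) : bP P = false <-> ~ P.
Proof. rewrite /bP; case: excluded_middle_informative => //. Qed.

Definition w (B : int -> Prop) (x : int) : int :=
  (if bP (B x) then 1 else 0) - (if x < 0 then 1 else 0).

Definition S (N : nat) (f : int -> int) : int :=
  \sum_(0 <= n < 2 * N) f (n%:Z - N%:Z).

Definition supp (B : int -> Prop) (N : nat) : Prop :=
  (forall x, N%:Z <= x -> ~ B x) /\ (forall x, x < - N%:Z -> B x).

Lemma w_ext B B' : set_eq B B' -> forall x, w B x = w B' x.
Proof.
move=> h x; rewrite /w; case E: (bP (B x)); case E': (bP (B' x)) => //.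
- by move/bPE: E => /h /bPE; rewrite E'.
- by move/bPE: E' => /h /bPE; rewrite E.
Qed.

Lemma S_ext N f g : (forall x, f x = g x) -> S N f = S N g.
Proof. by move=> h; apply: eq_bigr => i _; rewrite h. Qed.

Lemma S_add N f g : S N (fun x => f x + g x) = S N f + S N g.
Proof. by rewrite /S big_split. Qed.

Lemma S_scale N a f : S N (fun x => a * f x) = a * S N f.
Proof. by rewrite /S mulr_sumr. Qed.

Lemma sum_delta (M n0 : nat) (a : int) : (n0 < M)%N ->
  \sum_(0 <= n < M) (if n == n0 then a else 0) = a.
Proof.
elim: M => // M IH; rewrite ltnS leq_eqVlt => /orP [/eqP ->|h].
  rewrite big_nat_recr //= eqxx big1_seq ?add0r // => i /andP [_].
  by rewrite mem_index_iota => /andP [_ hi]; rewrite ltn_eqF.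
rewrite big_nat_recr //= IH // gtn_eqF // addr0 //.
Qed.

Lemma S_point N (m : int) (g : int -> int) : - N%:Z <= m -> m < N%:Z ->
  S N (fun x => (if x == m then 1 else 0) * g x) = g m.
Proof.
move=> h1 h2; rewrite /S.
have hn : (0 <= m + N%:Z) by lia.
pose n0 := absz (m + N%:Z).
have e0 : n0%:Z = m + N%:Z by rewrite /n0 gez0_abs.
rewrite (eq_bigr (fun n => if n == n0 then g m else 0)).
  apply: sum_delta; lia.
move=> n _; case: eqP => [E|E]; case: eqP => [E'|E'] //.
- by rewrite mul1r E.
- exfalso; apply: E'; apply/eqP; rewrite -eqz_nat; apply/eqP; lia.
- exfalso; apply: E; lia.
- by rewrite mul0r.
Qed.

Lemma w_add B B' m : ~ B m -> (forall x, B' x <-> B x \/ x = m) ->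
  forall x, w B' x = w B x + (if x == m then 1 else 0).
Proof.
move=> nB h x; rewrite /w; case: eqP => [->|ne].
  have -> : bP (B' m) = true by apply/bPE; apply/h; right.
  have -> : bP (B m) = false by apply/bPF.
  by ring.
have -> : bP (B' x) = bP (B x).
  case E: (bP (B x)).
    by apply/bPE; apply/h; left; apply/bPE.
  apply/bPF => /h [|//]; by move/bPE; rewrite E.
by rewrite addr0.
Qed.

Lemma S_addpt N B B' m g : ~ B m -> (forall x, B' x <-> B x \/ x = m) ->
  - N%:Z <= m -> m < N%:Z ->
  S N (fun x => w B' x * g x) = S N (fun x => w B x * g x) + g m.
Proof.
move=> nB h h1 h2.
rewrite (S_ext N (g:= fun x => w B x * g x + (if x == m then 1 else 0) * g x)).
  by rewrite S_add S_point.
by move=> x; rewrite (w_add nB h) mulrDl.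
Qed.

Lemma betaset_nil s x : betaset [::] s x <-> x < s.
Proof.
split.
  by move=> [j ->]; rewrite nth_nil; lia.
move=> h; exists (absz (s - x - 1)%R); rewrite nth_nil.
have e : (absz (s - x - 1)%R)%:Z = s - x - 1 by rewrite gez0_abs //; lia.
move: e; set j := absz _ => e; lia.
Qed.

Lemma betaset_cons a l s x :
  betaset (a :: l) s x <-> x = a%:Z - 1 + s \/ betaset l (s - 1) x.
Proof.
split.
  move=> [[|j] ->] /=; first by left; lia.
  by right; exists j; lia.
move=> [->|[j ->]]; first by exists 0%N => /=; lia.
by exists j.+1 => /=; lia.
Qed.

Lemma nth_le_head a l j : is_partition (a :: l) -> (nth 0%N l j <= a)%N.
Proof.
rewrite /is_partition /= => hp.
have tr : transitive geq by move=> y x z h1 h2; exact: leq_trans h2 h1.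
have := order_path_min tr hp.
move=> /allP ha.
case: (ltnP j (size l)) => hj.
  by apply: ha; apply: mem_nth.
by rewrite nth_default.
Qed.

Lemma partition_tail a l : is_partition (a :: l) -> is_partition l.
Proof. by rewrite /is_partition /=; apply: path_sorted. Qed.

Lemma nth_le_sumn l j : (nth 0%N l j <= sumn l)%N.
Proof.
elim: l j => [|a l IH] [|j] //=; first by apply: leq_addr.
by apply: leq_trans (IH j) (leq_addl _ _).
Qed.

Lemma supp_betaset l s (N : nat) :
  ((size l + sumn l)%:Z + (absz s)%:Z <= N%:Z) -> supp (betaset l s) N.
Proof.
move=> hN; split.
  move=> x hx [j E]. have := nth_le_sumn l j.
  lia.
move=> x hx; exists (absz (s - x - 1)%R).
have e : (absz (s - x - 1)%R)%:Z = s - x - 1.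
  rewrite gez0_abs //. lia.
rewrite nth_default; last first.
  rewrite -lez_nat; lia.
move: e; set j := absz _ => e; lia.
Qed.

Lemma supp_ext B B' N : set_eq B B' -> supp B N -> supp B' N.
Proof.
move=> h [h1 h2]; split; first by move=> x hx /h; apply: h1.
by move=> x hx; apply/h; apply: h2.
Qed.

Definition cN N B := S N (fun x => w B x * 1).
Definition QN N B := S N (fun x => w B x * (2 * x + 1)).

Lemma cQ_ext N B B' : set_eq B B' -> cN N B = cN N B' /\ QN N B = QN N B'.
Proof.
move=> h; split; apply: S_ext => x; by rewrite (w_ext h).
Qed.

Lemma bP_bool (b : bool) : bP b = b.
Proof. case: b; [by apply/bPE | by apply/bPF]. Qed.

Lemma vac0 N : cN N (fun x => x < 0) = 0 /\ QN N (fun x => x < 0) = 0.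
Proof.
have hw : forall x, w (fun x => x < 0) x = 0.
  by move=> x; rewrite /w /= bP_bool; case: (x < 0); rewrite subrr.
split; rewrite /cN /QN /S big1 // => i _; by rewrite hw mul0r.
Qed.

Lemma vac_step N (s : int) : - N%:Z <= s -> s < N%:Z ->
  cN N (fun x => x < s + 1) = cN N (fun x => x < s) + 1 /\
  QN N (fun x => x < s + 1) = QN N (fun x => x < s) + (2 * s + 1).
Proof.
move=> h1 h2.
have nB : ~ (s < s) by rewrite ltxx.
have h : forall x, x < s + 1 <-> x < s \/ x = s.
  move=> x; split; [move=> hx; case: (ltP x s) => hxs; [by left|right; lia] | case=> hx; lia].
split; rewrite /cN /QN.
  by rewrite (@S_addpt N (fun x => x < s) (fun x => x < s + 1) s (fun x => 1) nB h h1 h2).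
by rewrite (@S_addpt N (fun x => x < s) (fun x => x < s + 1) s (fun x => 2 * x + 1) nB h h1 h2).
Qed.

Lemma vac N (s : int) : - N%:Z <= s -> s <= N%:Z ->
  cN N (fun x => x < s) = s /\ QN N (fun x => x < s) = s ^+ 2.
Proof.
suff: forall n : nat, (n <= N)%N ->
   (cN N (fun x => x < n%:Z) = n%:Z /\ QN N (fun x => x < n%:Z) = n%:Z ^+ 2) /\
   (cN N (fun x => x < - n%:Z) = - n%:Z /\ QN N (fun x => x < - n%:Z) = (- n%:Z) ^+ 2).
  move=> H h1 h2; case: (lerP 0 s) => hs.
    have e : s = (absz s)%:Z by rewrite gez0_abs.
    have hh : (absz s <= N)%N by rewrite -lez_nat; lia.
    by rewrite e; apply: (H _ hh).1.
  have e : s = - (absz s)%:Z by rewrite ltz0_abs ?opprK.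
  have hh : (absz s <= N)%N by rewrite -lez_nat; lia.
  by rewrite e; apply: (H _ hh).2.
elim=> [|n IH] hn.
  have [a b] := vac0 N. by rewrite oppr0 a b expr0n.
have [[a b] [c d]] := IH (ltnW hn).
have hn' : n%:Z < N%:Z by rewrite ltz_nat.
split.
  have [e f] := vac_step (s := n%:Z) (N := N) ltac:(lia) hn'.
  have E : n.+1%:Z = n%:Z + 1 by lia.
  rewrite E e f a b; split; ring.
have [e f] := vac_step (s := - n.+1%:Z) (N := N) ltac:(rewrite -lez_nat in hn; lia) ltac:(lia).
have E : - n.+1%:Z + 1 = - n%:Z by lia.
rewrite E in e f.
have E2 : - n%:Z = - n.+1%:Z + 1 by lia.
split.
  rewrite c in e; lia.
rewrite d in f. rewrite E2 in f. 
have : QN N (fun x => x < - n.+1%:Z) = (- n.+1%:Z + 1) ^+ 2 - (2 * - n.+1%:Z + 1).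
  by rewrite f; ring.
move=> ->; ring.
Qed.

Lemma keyK l : is_partition l -> forall s N, supp (betaset l s) N ->
  - N%:Z + (size l)%:Z <= s ->
  cN N (betaset l s) = s /\ QN N (betaset l s) = 2 * (sumn l)%:Z + s ^+ 2.
Proof.
elim: l => [|a l IH] hp s N hs hsz.
  have E : set_eq (betaset [::] s) (fun x => x < s) by move=> x; apply: betaset_nil.
  have [e1 e2] := cQ_ext N E.
  rewrite e1 e2 /=.
  have hsN : s <= N%:Z.
    case: (lerP s N%:Z) => // hh; exfalso.
    by apply: (hs.1 N%:Z (lexx _)); apply/betaset_nil.
  have [v1 v2] := vac (s := s) (N := N) ltac:(simpl in hsz; lia) hsN.
  by rewrite v1 v2 mulr0 add0r.
set m := a%:Z - 1 + s.
set B' := betaset l (s - 1).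
have hl := partition_tail hp.
have nB : ~ B' m.
  move=> [j E]; have := nth_le_head j hp; rewrite -lez_nat; rewrite /m in E; lia.
have h : forall x, betaset (a :: l) s x <-> B' x \/ x = m.
  move=> x; rewrite betaset_cons; tauto.
have hm1 : - N%:Z <= m by rewrite /m; simpl in hsz; lia.
have hm2 : m < N%:Z.
  case: (lerP N%:Z m) => // hh; exfalso; apply: (hs.1 m hh); apply/h; by right.
have hs' : supp B' N.
  split.
    by move=> x hx hB; apply: (hs.1 x hx); apply/h; left.
  move=> x hx; case/h: (hs.2 x hx) => // E; rewrite E in hx; lia.
have [c1 c2] := IH hl (s - 1) N hs' ltac:(simpl in hsz; lia).
rewrite /cN /QN.
rewrite (@S_addpt N B' (betaset (a :: l) s) m (fun x => 1) nB h hm1 hm2).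
rewrite (@S_addpt N B' (betaset (a :: l) s) m (fun x => 2 * x + 1) nB h hm1 hm2).
rewrite /cN /QN in c1 c2; rewrite c1 c2 /m /=; split; first by ring.
rewrite PoszD; ring.
Qed.

Lemma keyA B N : supp B N -> exists l, is_partition l /\
  set_eq B (betaset l (- N%:Z + (size l)%:Z)).
Proof.
move=> [hs1 hs2].
suff H : forall m : nat, exists l, is_partition l /\
  set_eq (fun x => B x /\ x < - N%:Z + m%:Z) (betaset l (- N%:Z + (size l)%:Z)).
  have [l [hp he]] := H (2 * N)%N; exists l; split => // x.
  rewrite -he; split; last by case.
  move=> hB; split => //; case: (ltP x N%:Z) => hx; first by lia.
  by exfalso; apply: (hs1 x hx).
elim=> [|m [l [hp he]]].
  exists [::]; split => // x; rewrite betaset_nil /= addr0; split; first by case.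
  by move=> hx; split => //; apply: hs2.
set s := - N%:Z + (size l)%:Z.
have hlt : forall x, betaset l s x -> x < - N%:Z + m%:Z by move=> x /he [].
have hhead : (nth 0%N l 0)%:Z - 1 + s < - N%:Z + m%:Z.
  by apply: hlt; exists 0%N.
have hsz : (size l <= m)%N by rewrite -lez_nat; rewrite /s in hhead; lia.
case: (classic (B (- N%:Z + m%:Z))) => hu; last first.
  exists l; split => // x; rewrite -he; split.
    case=> hb hx; split => //; case: (ltP x (- N%:Z + m%:Z)) => // hx'.
    have E : x = - N%:Z + m%:Z by lia.
    by rewrite E in hb.
  by case=> hb hx; split => //; lia.
exists ((m - size l)%N :: l); split.
  move: hp hhead hsz; rewrite /is_partition /s; clear he hlt; rewrite /s; clear s; case: l => //= b l hp hhead hsz.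
  rewrite hp andbT -lez_nat; lia.
move=> x; rewrite betaset_cons /=.
have E1 : (m - size l)%N%:Z - 1 + (- N%:Z + (size l).+1%:Z) = - N%:Z + m%:Z.
  lia.
have E2 : - N%:Z + (size l).+1%:Z - 1 = s by rewrite /s; lia.
rewrite E1 E2 -he; split.
  case=> hb hx; case: (ltP x (- N%:Z + m%:Z)) => hx'.
    by right.
  left; lia.
case=> [->|[hb hx]]; first by split => //; lia.
by split => //; lia.
Qed.

Lemma sum_shift (h : nat -> int) (a m : nat) :
  \sum_(a <= i < a + m) h i = \sum_(j < m) h (a + j)%N.
Proof.
elim: m => [|m IH]; first by rewrite addn0 big_geq // big_ord0.
rewrite addnS big_nat_recr ?leq_addr //= IH big_ord_recr //.
Qed.

Lemma sum_block (h : nat -> int) (m T : nat) :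
  \sum_(0 <= n < T * m) h n = \sum_(0 <= t < T) \sum_(j < m) h (t * m + j)%N.
Proof.
elim: T => [|T IH]; first by rewrite mul0n !big_geq.
rewrite big_nat_recr //= -IH mulSn addnC (big_cat_nat (n := T * m)) ?leq_addr //=.
congr (_ + _).
by rewrite sum_shift; apply: eq_bigr => j _; rewrite addnC.
Qed.

Lemma S_reindex (m N : nat) f : (0 < m)%N ->
  S (m * N) f = \sum_(j < m) S N (fun q => f (q * m%:Z + j%:Z)).
Proof.
move=> hm; rewrite /S.
have -> : (2 * (m * N) = (2 * N) * m)%N by rewrite mulnA [(2 * m)%N]mulnC -mulnA mulnC.
rewrite sum_block exchange_big /=.
apply: eq_bigr => j _; apply: eq_bigr => t _.
congr f; rewrite PoszD PoszM PoszM; ring.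
Qed.

Lemma runnerP e i B c : (0 < e)%N -> (i < e)%N ->
  runner e i B c <-> B (c * e%:Z + i%:Z).
Proof.
move=> he hi; split.
  move=> [b [hb [hd ->]]]; rewrite divzK //.
  by have -> : b - i%:Z + i%:Z = b by ring.
move=> hb; exists (c * e%:Z + i%:Z); split => //.
have -> : c * e%:Z + i%:Z - i%:Z = c * e%:Z by ring.
split; first by apply: dvdz_mull; apply: dvdzz.
by rewrite mulzK //; lia.
Qed.

Lemma supp_runner e i B N : (0 < e)%N -> (i < e)%N -> supp B (e * N) ->
  supp (runner e i B) N.
Proof.
move=> he hi [h1 h2]; split.
  move=> x hx /(runnerP _ _ he hi); apply: h1; rewrite PoszM; nia.
move=> x hx; apply/(runnerP _ _ he hi); apply: h2; rewrite PoszM; nia.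
Qed.

Lemma euclid_uniq (e a a' i i' : int) : 0 <= i < e -> 0 <= i' < e ->
  a * e + i = a' * e + i' -> a = a' /\ i = i'.
Proof. move=> h1 h2 h; have E : a = a' by nia. by split => //; rewrite E in h; lia. Qed.

Lemma uglovP e r (la : 'I_r -> seq nat) s i a : (0 < e)%N -> (i < e)%N ->
  @uglov_set e r la s (a * e%:Z + i%:Z) <->
  exists (k : 'I_r) q, a = q * r%:Z + (r%:Z - k.+1%:Z) /\
     betaset (la k) (s k) (q * e%:Z + i%:Z).
Proof.
move=> he hi; split.
  move=> [k [x [hx E]]]; exists k; exists (x %/ e%:Z)%Z.
  rewrite /psi in E.
  have hm1 : 0 <= (x %% e%:Z)%Z by apply: modz_ge0; lia.
  have hm2 : (x %% e%:Z)%Z < e%:Z by apply: ltz_pmod; lia.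
  have hi' : 0 <= i%:Z < e%:Z by lia.
  have hm : 0 <= (x %% e%:Z)%Z < e%:Z by rewrite hm1 hm2.
  have [E1 E2] := euclid_uniq hi' hm E.
  split; first by rewrite E1; ring.
  by rewrite E2 -divz_eq.
move=> [k [q [-> hb]]]; exists k; exists (q * e%:Z + i%:Z); split => //.
rewrite /psi divzMDl; last by lia.
rewrite divz_small; last by rewrite gtz0_abs; lia.
rewrite modzMDl modz_small; last by lia.
by ring.
Qed.

Definition interleaved r (C : 'I_r -> int -> Prop) (D : int -> Prop) :=
  forall a, D a <-> exists (k : 'I_r) q, a = q * r%:Z + (r%:Z - k.+1%:Z) /\ C k q.

Lemma w_inter r C D : interleaved C D -> forall q (j : 'I_r),
  w D (q * r%:Z + j%:Z) = w (C (rev_ord j)) q.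
Proof.
move=> h q j; rewrite /w.
have hj := ltn_ord j.
have -> : bP (D (q * r%:Z + j%:Z)) = bP (C (rev_ord j) q).
  have E : D (q * r%:Z + j%:Z) <-> C (rev_ord j) q.
    rewrite h; split.
      move=> [k [q' [E hc]]].
      have hk := ltn_ord k.
      have hj' : 0 <= j%:Z < r%:Z by lia.
      have hk' : 0 <= r%:Z - k.+1%:Z < r%:Z by lia.
      have [E1 E2] := euclid_uniq hj' hk' E.
      have -> : rev_ord j = k by apply: val_inj => /=; lia.
      by rewrite E1.
    move=> hc; exists (rev_ord j); exists q; split => //=.
    rewrite subzn //; lia.
  case E1 : (bP (C (rev_ord j) q)).
    by apply/bPE; apply/E; apply/bPE.
  by apply/bPF => /E /bPE; rewrite E1.
congr (_ - _); have -> : (q * r%:Z + j%:Z < 0) = (q < 0).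
  apply/idP/idP; nia.
by [].
Qed.

Lemma inter_decomp r C D N g : (0 < r)%N -> interleaved C D ->
  S (r * N) (fun x => w D x * g x) =
  \sum_(k < r) S N (fun q => w (C k) q * g (q * r%:Z + (r%:Z - k.+1%:Z))).
Proof.
move=> hr h; rewrite S_reindex //.
rewrite (reindex_inj rev_ord_inj) /=.
apply: eq_bigr => j _; apply: S_ext => q /=.
have := w_inter h q (rev_ord j); rewrite rev_ordK /= => ->; congr (_ * g _).
rewrite subzn; last exact: ltn_ord.
lia.
Qed.

Definition Fr (r : nat) (c : nat -> int) : int :=
  \sum_(0 <= k < r) (r%:Z * c k ^+ 2 + (r%:Z - 1 - 2 * k%:Z) * c k)
  - (\sum_(0 <= k < r) c k) ^+ 2.

Definition hh (u : int) := u * (u + 1).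

Lemma hh_ge0 u : 0 <= hh u.
Proof. rewrite /hh; case: (lerP 0 u) => h; nia. Qed.

Lemma hlem a b : 2 * (b - a - 1) <= hh a + hh b.
Proof.
rewrite /hh.
have h1 : 0 <= (a + 1) * (a + 2) by case: (lerP 0 (a+1)) => h; nia.
have h2 : 0 <= (b - 1) * b by case: (lerP 0 b) => h; nia.
nia.
Qed.

Lemma sum_const_int (r : nat) (x : int) : \sum_(0 <= k < r) x = r%:Z * x.
Proof. by rewrite sumr_const_nat subn0 -mulr_natl natz. Qed.

Lemma Fstep r c : Fr r.+1 c = Fr r c + \sum_(0 <= k < r) hh (c k - c r).
Proof.
rewrite /Fr !big_nat_recr //=.
have E1 : \sum_(0 <= k < r) ((r.+1)%:Z * c k ^+ 2 + ((r.+1)%:Z - 1 - 2 * k%:Z) * c k)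
  = \sum_(0 <= k < r) (r%:Z * c k ^+ 2 + (r%:Z - 1 - 2 * k%:Z) * c k)
    + \sum_(0 <= k < r) (c k ^+ 2 + c k).
  have Er : (r.+1)%:Z = r%:Z + 1 by lia.
  rewrite -big_split /=; apply: eq_bigr => k _; rewrite Er; ring.
have E2 : \sum_(0 <= k < r) hh (c k - c r) =
  \sum_(0 <= k < r) (c k ^+ 2 + c k) + (- 2 * c r) * \sum_(0 <= k < r) c k
  + \sum_(0 <= k < r) (c r ^+ 2 - c r).
  rewrite mulr_sumr -!big_split /=; apply: eq_bigr => k _; rewrite /hh; ring.
have Er : (r.+1)%:Z = r%:Z + 1 by lia.
rewrite E1 E2 sum_const_int Er; ring.
Qed.

Lemma Fpos r c : 0 <= Fr r c.
Proof.
elim: r => [|r IH]; first by rewrite /Fr !big_geq // expr0n /= subrr.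
rewrite Fstep; apply: addr_ge0 => //; apply: sumr_ge0 => k _; apply: hh_ge0.
Qed.

Lemma single_le (f : nat -> int) k0 r : (forall k, 0 <= f k) -> (k0 < r)%N ->
  f k0 <= \sum_(0 <= k < r) f k.
Proof.
move=> h; elim: r => // r IH; rewrite ltnS leq_eqVlt => /orP [/eqP ->|hk].
  rewrite big_nat_recr //= lerDr; apply: sumr_ge0 => k _; apply: h.
rewrite big_nat_recr //=; apply: le_trans (IH hk) _; rewrite lerDl; apply: h.
Qed.

Lemma Fpair c c' k0 r : (k0 < r)%N ->
  2 * (\sum_(0 <= k < r) ((c' k - c k) - (c' k0 - c k0) - 1) + 1) <= Fr r c + Fr r c'.
Proof.
elim: r => // r IH; rewrite ltnS leq_eqVlt => /orP [/eqP E|hk].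
  subst k0.
  rewrite !Fstep big_nat_recr //=.
  have -> : 2 * (\sum_(0 <= i < r) (c' i - c i - (c' r - c r) - 1) +
     (c' r - c r - (c' r - c r) - 1) + 1) =
     \sum_(0 <= i < r) 2 * (c' i - c i - (c' r - c r) - 1).
    rewrite -mulr_sumr; ring.
  have H1 := Fpos r c; have H2 := Fpos r c'.
  have H3 : \sum_(0 <= i < r) 2 * (c' i - c i - (c' r - c r) - 1) <=
     \sum_(0 <= i < r) (hh (c i - c r) + hh (c' i - c' r)).
    apply: ler_sum => i _.
    have := hlem (c i - c r) (c' i - c' r).
    have -> : c' i - c' r - (c i - c r) - 1 = c' i - c i - (c' r - c r) - 1 by ring.
    by [].
  rewrite big_split /= in H3.
  lra.
have IH' := IH hk.
rewrite !Fstep big_nat_recr //=.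
have H1 := @single_le (fun k => hh (c k - c r)) _ _ (fun k => hh_ge0 _) hk.
have H2 := @single_le (fun k => hh (c' k - c' r)) _ _ (fun k => hh_ge0 _) hk.
have H3 := hlem (c' k0 - c' r) (c k0 - c r).
simpl in H1, H2.
lra.
Qed.

Lemma ord_to_nat (n : nat) (F : 'I_n.+1 -> int) :
  \sum_(k < n.+1) F k = \sum_(0 <= k < n.+1) F (inord k).
Proof. rewrite big_mkord; apply: eq_bigr => k _; by rewrite inord_val. Qed.

Lemma two_le (f : nat -> int) k0 r : (forall k, 0 <= f k) -> (k0.+1 < r)%N ->
  f k0 + f k0.+1 <= \sum_(0 <= k < r) f k.
Proof.
move=> h hk; rewrite (big_cat_nat (n := k0.+2)) //=.
rewrite !big_nat_recr //=.
have h1 : 0 <= \sum_(0 <= i < k0) f i by apply: sumr_ge0.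
have h2 : 0 <= \sum_(k0.+2 <= i < r) f i by apply: sumr_ge0.
lra.
Qed.

Lemma Posz_sum (n : nat) (f : nat -> nat) :
  ((\sum_(i < n) f i)%N)%:Z = \sum_(0 <= i < n) (f i)%:Z.
Proof.
rewrite big_mkord; elim: n f => [|n IH] f; first by rewrite !big_ord0.
by rewrite !big_ord_recr /= PoszD IH.
Qed.

Lemma get_bad e la s : ~ rouquier e la s ->
  exists rho t, is_eta e la s rho t /\ exists i, (i.+1 < e)%N /\
    (t i.+1 - t i + 1%:Z < (eweight e rho)%:Z).
Proof.
move=> h; apply: NNPP => hn; apply: h => rho t het i hi.
case: (lerP (eweight e rho)%:Z (t i.+1 - t i + 1%:Z)) => // hlt.
by exfalso; apply: hn; exists rho, t; split => //; exists i.
Qed.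

Unset Implicit Arguments.

Theorem lemma3p3 (e r : nat) (he : (2 <= e)%N) (hr : (1 <= r)%N)
  (la : 'I_r -> seq nat) (s : 'I_r -> int)
  (hla : forall k, is_partition (la k))
  (hnot : ~ (forall k : 'I_r, rouquier e (la k) (s k)))
  (lat : seq nat) (st : int) (hlat : is_partition lat)
  (hpsi : set_eq (betaset lat st) (@uglov_set e r la s)) :
  ~ r_rouquier e r lat st.
Proof.
move=> H.
have he0 : (0 < e)%N by lia.
have hr0 : (0 < r)%N by lia.
have [k0 hk0] : exists k0, ~ rouquier e (la k0) (s k0) by apply: not_all_ex_not.
have [rho0 [t0 [heta0 [i0 [hi0 hbad]]]]] := get_bad hk0.
set N := (\sum_(i < e) (size (rho0 i) + absz (t0 i)) +
          \sum_(k < r) (size (la k) + sumn (la k) + absz (s k)) +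
          (size lat + sumn lat + absz st))%N.
have hNa : forall i, (i < e)%N -> (size (rho0 i) + absz (t0 i) <= N)%N.
  move=> i hi; rewrite /N (bigD1 (Ordinal hi)) //=; lia.
have hNb : forall k, (size (la k) + sumn (la k) + absz (s k) <= N)%N.
  move=> k; rewrite /N (bigD1 k) //=; lia.
have hNc : (size lat + sumn lat + absz st <= N)%N by rewrite /N; lia.
clearbody N.
set C := fun (k : 'I_r) (i : nat) => runner e i (betaset (la k) (s k)).
set D := fun (i : nat) => runner e i (betaset lat st).
have suppC : forall k i, (i < e)%N -> supp (C k i) N.
  move=> k i hi; apply: supp_runner => //; apply: supp_betaset.
  have := hNb k; have : (N <= e * N)%N by apply: leq_pmull.
  rewrite PoszM; lia.
have suppD : forall i, (i < e)%N -> supp (D i) (r * N).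
  move=> i hi; apply: supp_runner => //; apply: supp_betaset.
  have : (N <= e * (r * N))%N by apply: leq_trans (leq_pmull _ hr0) (leq_pmull _ he0).
  move: hNc; rewrite !PoszM; lia.
have interD : forall i, (i < e)%N -> interleaved (fun k => C k i) (D i).
  move=> i hi a; rewrite /D /C (runnerP _ _ he0 hi) hpsi uglovP //.
  split; move=> [k [q [E hb]]]; exists k; exists q; split => //.
    by apply/runnerP.
  by move/runnerP: hb; apply.
have nnC : forall k i, (i < e)%N -> (cN N (C k i)) ^+ 2 <= QN N (C k i).
  move=> k i hi; have [l [hp hE]] := keyA (suppC k i hi).
  have [e1 e2] := cQ_ext N hE.
  have [k1 k2] := keyK hp (supp_ext hE (suppC k i hi)) (lexx _).
  rewrite e1 e2 k1 k2; lia.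
have hk0i : forall i, (i < e)%N -> cN N (C k0 i) = t0 i /\
    QN N (C k0 i) = 2 * (sumn (rho0 i))%:Z + t0 i ^+ 2.
  move=> i hi; have [hp hE] := heta0 i hi.
  have [e1 e2] := cQ_ext N hE.
  have hsz : - N%:Z + (size (rho0 i))%:Z <= t0 i by have := hNa i hi; lia.
  have [k1 k2] := keyK hp (supp_ext hE (suppC k0 i hi)) hsz.
  by rewrite e1 e2 k1 k2.
have HA : forall i, exists l : seq nat, (i < e)%N -> is_partition l /\
    set_eq (D i) (betaset l (- (r * N)%:Z + (size l)%:Z)).
  move=> i; case: (ltnP i e) => hi.
    by have [l [hp hE]] := keyA (suppD i hi); exists l.
  by exists [::].
pose P := fun i => proj1_sig (constructive_indefinite_description _ (HA i)).
have HP : forall i, (i < e)%N -> is_partition (P i) /\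
    set_eq (D i) (betaset (P i) (- (r * N)%:Z + (size (P i))%:Z)).
  move=> i hi; exact: (proj2_sig (constructive_indefinite_description _ (HA i)) hi).
pose T := fun i => - (r * N)%:Z + (size (P i))%:Z.
have his : is_eta e lat st P T by move=> i hi; exact: HP i hi.
have HH := H P T his i0 hi0.
have hPi : forall i, (i < e)%N -> cN (r * N) (D i) = T i /\
    QN (r * N) (D i) = 2 * (sumn (P i))%:Z + T i ^+ 2.
  move=> i hi; have [hp hE] := HP i hi.
  have [e1 e2] := cQ_ext (r * N) hE.
  have [k1 k2] := keyK hp (supp_ext hE (suppD i hi)) (lexx _).
  by rewrite e1 e2 k1 k2.
have decC : forall i, (i < e)%N -> cN (r * N) (D i) = \sum_(k < r) cN N (C k i).
  by move=> i hi; rewrite /cN (inter_decomp N (fun _ => 1) hr0 (interD i hi)).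
have decQ : forall i, (i < e)%N -> QN (r * N) (D i) =
    \sum_(k < r) (r%:Z * QN N (C k i) + (r%:Z - 1 - 2 * k%:Z) * cN N (C k i)).
  move=> i hi; rewrite /QN (inter_decomp N (fun x => 2 * x + 1) hr0 (interD i hi)).
  apply: eq_bigr => k _; rewrite /cN -S_scale -S_scale -S_add; apply: S_ext => q.
  have Ek : k.+1%:Z = k%:Z + 1 by lia.
  rewrite Ek; ring.
pose fromo := fun (F : 'I_r -> int) (k : nat) => oapp F 0 (insub k).
have fromoE : forall F (k : 'I_r), fromo F k = F k by move=> F k; rewrite /fromo valK.
pose cv := fun i => fromo (fun k => cN N (C k i)).
pose qv := fun i => fromo (fun k => QN N (C k i)).
have sumT : forall i, (i < e)%N -> T i = \sum_(0 <= k < r) cv i k.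
  move=> i hi; rewrite -(hPi i hi).1 decC // big_mkord.
  by apply: eq_bigr => k _; rewrite /cv fromoE.
have nnv : forall i, (i < e)%N -> forall k, 0 <= qv i k - cv i k ^+ 2.
  move=> i hi k; rewrite /qv /cv /fromo; case: insubP => [kk _ _|_] /=.
    by have := nnC kk i hi; lia.
  by rewrite expr0n /= subrr.
have Pform : forall i, (i < e)%N ->
    2 * (sumn (P i))%:Z = r%:Z * \sum_(0 <= k < r) (qv i k - cv i k ^+ 2) + Fr r (cv i).
  move=> i hi.
  have E1 : 2 * (sumn (P i))%:Z = QN (r * N) (D i) - (T i) ^+ 2 by rewrite (hPi i hi).2; ring.
  rewrite E1 decQ // sumT // /Fr.
  have E2 : \sum_(k < r) (r%:Z * QN N (C k i) + (r%:Z - 1 - 2 * k%:Z) * cN N (C k i)) =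
     \sum_(0 <= k < r) (r%:Z * qv i k + (r%:Z - 1 - 2 * k%:Z) * cv i k).
    by rewrite big_mkord; apply: eq_bigr => k _; rewrite /qv /cv !fromoE.
  rewrite E2.
  have E3 : \sum_(0 <= k < r) (r%:Z * qv i k + (r%:Z - 1 - 2 * k%:Z) * cv i k) =
     r%:Z * \sum_(0 <= k < r) (qv i k - cv i k ^+ 2) +
     \sum_(0 <= k < r) (r%:Z * cv i k ^+ 2 + (r%:Z - 1 - 2 * k%:Z) * cv i k).
    rewrite mulr_sumr -big_split /=; apply: eq_bigr => k _; ring.
  rewrite E3; ring.
have k0v : forall i, (i < e)%N -> cv i k0 = t0 i /\ qv i k0 = 2 * (sumn (rho0 i))%:Z + t0 i ^+ 2.
  by move=> i hi; rewrite /cv /qv !fromoE; apply: hk0i.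
pose Y := fun i => if (i < e)%N then 2 * (sumn (P i))%:Z - r%:Z * (2 * (sumn (rho0 i))%:Z) else 0.
have Ylow : forall i, (i < e)%N -> Fr r (cv i) <= Y i.
  move=> i hi; rewrite /Y hi Pform //.
  have := @single_le (fun k => qv i k - cv i k ^+ 2) k0 r (nnv i hi) (ltn_ord k0).
  have [a b] := k0v i hi; rewrite /= a b => hs.
  have : r%:Z * (2 * (sumn (rho0 i))%:Z) <= r%:Z * \sum_(0 <= k < r) (qv i k - cv i k ^+ 2).
    apply: ler_wpM2l => //; by rewrite addrK in hs.
  lra.
have Ynn : forall i, 0 <= Y i.
  move=> i; case: (ltnP i e) => hi.
    by apply: le_trans (Fpos r (cv i)) (Ylow i hi).
  by rewrite /Y ltnNge hi.
have sumP : 2 * (eweight e P)%:Z = r%:Z * (2 * (eweight e rho0)%:Z) + \sum_(0 <= i < e) Y i.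
  rewrite /eweight (Posz_sum e (fun i => psize (P i))) (Posz_sum e (fun i => psize (rho0 i))) mulr_sumr mulr_sumr mulr_sumr -big_split /=.
  apply: eq_big_nat => i /andP [_ hi]; rewrite /Y hi /psize; ring.
have two := two_le Ynn hi0.
have hi0' : (i0 < e)%N by apply: ltnW.
have Y0 := Ylow i0 hi0'.
have Y1 := Ylow i0.+1 hi0.
have FP := Fpair (cv i0) (cv i0.+1) (ltn_ord k0).
have Esum : \sum_(0 <= k < r) (cv i0.+1 k - cv i0 k - (cv i0.+1 k0 - cv i0 k0) - 1) =
    T i0.+1 - T i0 - r%:Z * (cv i0.+1 k0 - cv i0 k0 + 1).
  rewrite !sumrB !sum_const_int sumT // sumT //; ring.
rewrite Esum in FP.
have [a0 _] := k0v i0 hi0'.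
have [a1 _] := k0v i0.+1 hi0.
rewrite a0 a1 in FP.
have hr1 : 0 <= r%:Z by [].
have : 0 <= r%:Z * ((eweight e rho0)%:Z - (t0 i0.+1 - t0 i0 + 2)).
  apply: mulr_ge0 => //; lia.
move: HH; rewrite /eweight.
nra.
Qed.
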